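(* For every finite sequence $\Gamma$ and formula $A$ of the $\nabla$-free language $\mathcal{L}=\{\wedge,\vee,\top,\bot,1,\otimes,\to\}$: $\Gamma\vdash_{\mathbf{FL}_l}A$ if and only if $\Gamma^{\nabla}\vdash_{\mathbf{STL}(N)}A^{\nabla}$.
   Context: Formulas of $\mathcal{L}_\nabla$ are built from variables and constants $1,\top,\bot$ by $\wedge,\vee,\otimes,\to$ and unary $\nabla$; $\mathcal{L}$ is the $\nabla$-free fragment. Sequents $\Gamma\Rightarrow A$ have $\Gamma$ a finite sequence; $\nabla\Gamma$ applies $\nabla$ to each member. $\mathbf{STL}$ has axioms $A\Rightarrow A$, $\Rightarrow1$, $\nabla1\Rightarrow1$, $\Gamma\Rightarrow\top$, $\Gamma,\bot,\Sigma\Rightarrow A$ and rules (premises / conclusion): cut: $\Gamma\Rightarrow A$, $\Pi,A,\Sigma\Rightarrow B$ / $\Pi,\Gamma,\Sigma\Rightarrow B$; $L\wedge$: $\Gamma,A,\Sigma\Rightarrow C$ / $\Gamma,A\wedge B,\Sigma\Rightarrow C$ and $\Gamma,B,\Sigma\Rightarrow C$ / $\Gamma,A\wedge B,\Sigma\Rightarrow C$; $R\wedge$: $\Gamma\Rightarrow A$, $\Gamma\Rightarrow B$ / $\Gamma\Rightarrow A\wedge B$; $L\vee$: $\Gamma,A,\Sigma\Rightarrow C$, $\Gamma,B,\Sigma\Rightarrow C$ / $\Gamma,A\vee B,\Sigma\Rightarrow C$; $R\vee$: $\Gamma\Rightarrow A$ / $\Gamma\Rightarrow A\vee B$ and $\Gamma\Rightarrow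 B$ / $\Gamma\Rightarrow A\vee B$; $L1$: $\Gamma,\Sigma\Rightarrow A$ / $\Gamma,1,\Sigma\Rightarrow A$; $L\otimes$: $\Gamma,A,B,\Sigma\Rightarrow C$ / $\Gamma,A\otimes B,\Sigma\Rightarrow C$; $R\otimes$: $\Gamma\Rightarrow A$, $\Sigma\Rightarrow B$ / $\Gamma,\Sigma\Rightarrow A\otimes B$; $(\nabla)$: $A\Rightarrow B$ / $\nabla A\Rightarrow\nabla B$; Oplax: $\nabla A,\nabla B\Rightarrow C$ / $\nabla(A\otimes B)\Rightarrow C$; $L\to$: $\Gamma\Rightarrow A$, $\Pi,B,\Sigma\Rightarrow C$ / $\Pi,\Gamma,\nabla(A\to B),\Sigma\Rightarrow C$; $R\to$: $A,\nabla\Gamma\Rightarrow B$ / $\Gamma\Rightarrow A\to B$. Schemes: $(N)$: $\Gamma\Rightarrow A$ / $\nabla\Gamma\Rightarrow\nabla A$; $(P)$: $\Gamma\Rightarrow\nabla A$ / $\Gamma\Rightarrow A$; $(F)$: $\Gamma\Rightarrow A$ / $\Gamma\Rightarrow\nabla A$. $\mathbf{STL}(N)$ is $\mathbf{STL}$ plus $(N)$, and $\mathbf{FL}_l$ is $\mathbf{STL}$ plus $(P)$ and $(F)$. Writing $\Box A$ for $1\to A$, the translation $(-)^\nabla:\mathcal{L}\to\mathcal{L}_\nabla$ is: $p^\nabla=\nabla\Box p$ for variables $p$, $\bot^\nabla=\bot$, $\top^\nabla=\nabla\Box\top$, $1^\nabla=1$, $(A\wedge B)^\nabla=\nabla\Box(A^\nabla\wedge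 B^\nabla)$, $(A\vee B)^\nabla=A^\nabla\vee B^\nabla$, $(A\otimes B)^\nabla=A^\nabla\otimes B^\nabla$, $(A\to B)^\nabla=\nabla(A^\nabla\to B^\nabla)$; $\Gamma^\nabla$ translates each member of $\Gamma$. *)

(* Defs.v *)
From Stdlib Require Import List.
Import ListNotations.

Inductive formula : Type :=
| Var : nat -> formula
| One : formula
| Top : formula
| Bot : formula
| And : formula -> formula -> formula
| Or : formula -> formula -> formula
| Tens : formula -> formula -> formula
| Imp : formula -> formula -> formula
| Nab : formula -> formula.

Fixpoint nabla_free (A : formula) : Prop :=
  match A with
  | Var _ | One | Top | Bot => True
  | And A B | Or A B | Tens A B | Imp A B => nabla_free A /\ nabla_free B
  | Nab _ => False
  end.

Definition nablaL (G : list formula) : list formula := map Nab G.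

Record schemes : Type := { useN : bool; useP : bool; useF : bool }.

Definition STL_N : schemes := {| useN := true; useP := false; useF := false |}.
Definition FL_l : schemes := {| useN := false; useP := true; useF := true |}.

Inductive derivable (S : schemes) : list formula -> formula -> Prop :=
| ax_id : forall A, derivable S [A] A
| ax_one : derivable S [] One
| ax_nab_one : derivable S [Nab One] One
| ax_top : forall G, derivable S G Top
| ax_bot : forall G Sg A, derivable S (G ++ Bot :: Sg) A
| r_cut : forall G Pi Sg A B,
    derivable S G A -> derivable S (Pi ++ A :: Sg) B ->
    derivable S (Pi ++ G ++ Sg) B
| r_andL1 : forall G Sg A B C,
    derivable S (G ++ A :: Sg) C -> derivable S (G ++ And A B :: Sg) C
| r_andL2 : forall G Sg A B C,
    derivable S (G ++ B :: Sg) C -> derivable S (G ++ And A B :: Sg) C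
| r_andR : forall G A B,
    derivable S G A -> derivable S G B -> derivable S G (And A B)
| r_orL : forall G Sg A B C,
    derivable S (G ++ A :: Sg) C -> derivable S (G ++ B :: Sg) C ->
    derivable S (G ++ Or A B :: Sg) C
| r_orR1 : forall G A B, derivable S G A -> derivable S G (Or A B)
| r_orR2 : forall G A B, derivable S G B -> derivable S G (Or A B)
| r_oneL : forall G Sg A,
    derivable S (G ++ Sg) A -> derivable S (G ++ One :: Sg) A
| r_tensL : forall G Sg A B C,
    derivable S (G ++ A :: B :: Sg) C -> derivable S (G ++ Tens A B :: Sg) C
| r_tensR : forall G Sg A B,
    derivable S G A -> derivable S Sg B -> derivable S (G ++ Sg) (Tens A B)
| r_nab : forall A B,
    derivable S [A] B -> derivable S [Nab A] (Nab B)
| r_oplax : forall A B C,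
    derivable S [Nab A; Nab B] C -> derivable S [Nab (Tens A B)] C
| r_impL : forall G Pi Sg A B C,
    derivable S G A -> derivable S (Pi ++ B :: Sg) C ->
    derivable S (Pi ++ G ++ Nab (Imp A B) :: Sg) C
| r_impR : forall G A B,
    derivable S (A :: nablaL G) B -> derivable S G (Imp A B)
| r_N : forall G A, useN S = true ->
    derivable S G A -> derivable S (nablaL G) (Nab A)
| r_P : forall G A, useP S = true ->
    derivable S G (Nab A) -> derivable S G A
| r_F : forall G A, useF S = true ->
    derivable S G A -> derivable S G (Nab A).

Definition Box (A : formula) : formula := Imp One A.

(* The translation (-)^nabla : L -> L_nabla (applied to all formulas; on the
   nabla-free fragment it is the paper's translation). *)
Fixpoint trans (A : formula) : formula :=
  match A with
  | Var p => Nab (Box (Var p))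
  | Bot => Bot
  | Top => Nab (Box Top)
  | One => One
  | And A B => Nab (Box (And (trans A) (trans B)))
  | Or A B => Or (trans A) (trans B)
  | Tens A B => Tens (trans A) (trans B)
  | Imp A B => Nab (Imp (trans A) (trans B))
  | Nab A => Nab (trans A)  (* irrelevant: never used on L *)
  end.

Definition transL (G : list formula) : list formula := map trans G.

(* Main.v *)
Require Import Defs.
From Stdlib Require Import List.
Import ListNotations.

Section Gen.
Variable S : schemes.

Lemma cut1 X Y Pi Sg C : derivable S [X] Y -> derivable S (Pi ++ Y :: Sg) C ->
  derivable S (Pi ++ X :: Sg) C.
Proof. intros H1 H2. exact (r_cut S [X] Pi Sg Y C H1 H2). Qed.

Lemma cutR G X Y : derivable S G X -> derivable S [X] Y -> derivable S G Y.
Proof.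
  intros H1 H2. pose proof (r_cut S G [] [] X Y H1 H2) as H.
  simpl in H. rewrite app_nil_r in H. exact H.
Qed.

Lemma cuts G D : Forall2 (fun X Y => derivable S [X] Y) G D ->
  forall Pi Sg C, derivable S (Pi ++ D ++ Sg) C -> derivable S (Pi ++ G ++ Sg) C.
Proof.
  induction 1 as [|X Y G D HXY HF IH]; intros Pi Sg C H; simpl in *; auto.
  apply (cut1 X Y) in H; auto.
  replace (Pi ++ X :: G ++ Sg) with ((Pi ++ [X]) ++ G ++ Sg)
    by (rewrite <- app_assoc; reflexivity).
  apply IH. rewrite <- app_assoc. exact H.
Qed.

Lemma cutsL G D Pi C : Forall2 (fun X Y => derivable S [X] Y) G D ->
  derivable S (Pi ++ D) C -> derivable S (Pi ++ G) C.
Proof.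
  intros HF H. pose proof (cuts G D HF Pi [] C) as K.
  rewrite !app_nil_r in K. auto.
Qed.

Lemma cuts0 G D C : Forall2 (fun X Y => derivable S [X] Y) G D ->
  derivable S D C -> derivable S G C.
Proof. intros HF H. exact (cutsL G D [] C HF H). Qed.

Lemma F2_l (f : formula -> formula) G :
  (forall x, In x G -> derivable S [f x] x) ->
  Forall2 (fun X Y => derivable S [X] Y) (map f G) G.
Proof.
  induction G; simpl; intros H; constructor; auto.
Qed.

Lemma F2_r (f : formula -> formula) G :
  (forall x, In x G -> derivable S [x] (f x)) ->
  Forall2 (fun X Y => derivable S [X] Y) G (map f G).
Proof.
  induction G; simpl; intros H; constructor; auto.
Qed.

Lemma counit X : derivable S [Nab (Box X)] X.
Proof.
  exact (r_impL S [] [] [] One X X (ax_one S) (ax_id S X)).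
Qed.

Lemma boxR G X : derivable S (nablaL G) X -> derivable S G (Box X).
Proof.
  intros H. apply r_impR. exact (r_oneL S [] _ _ H).
Qed.

Lemma counits G : Forall2 (fun X Y => derivable S [X] Y) (nablaL (map Box G)) G.
Proof.
  unfold nablaL. rewrite map_map. apply (F2_l (fun x => Nab (Box x))).
  intros; apply counit.
Qed.

End Gen.

Definition stable X := derivable STL_N [X] (Nab (Box X)).

Lemma nN : useN STL_N = true. Proof. reflexivity. Qed.

Lemma nab_mono A B : derivable STL_N [A] B -> derivable STL_N [Nab A] (Nab B).
Proof. apply r_nab. Qed.

Lemma stable_nab Z : stable (Nab Z).
Proof. apply r_nab. apply boxR. apply ax_id. Qed.

Lemma stable_one : stable One.
Proof.
  unfold stable. apply (r_oneL _ [] []). simpl.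
  apply (r_N _ [] _ nN). apply boxR. apply ax_one.
Qed.

Lemma stable_bot : stable Bot.
Proof. exact (ax_bot _ [] [] _). Qed.

Lemma stable_or X Y : stable X -> stable Y -> stable (Or X Y).
Proof.
  unfold stable; intros HX HY. apply (r_orL _ [] []); simpl.
  - eapply cutR; [exact HX|]. apply r_nab, boxR. simpl. apply r_orR1, counit.
  - eapply cutR; [exact HY|]. apply r_nab, boxR. simpl. apply r_orR2, counit.
Qed.

Lemma stable_tens X Y : stable X -> stable Y -> stable (Tens X Y).
Proof.
  unfold stable; intros HX HY. apply (r_tensL _ [] []); simpl.
  apply (cuts0 _ _ [Nab (Box X); Nab (Box Y)]).
  { constructor; [exact HX|constructor; [exact HY|constructor]]. }
  apply (r_N _ [Box X; Box Y] _ nN). apply boxR. simpl.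
  apply (r_tensR _ [Nab (Box X)] [Nab (Box Y)]); apply counit.
Qed.

Fixpoint tr (A : formula) : formula :=
  match A with
  | Var p => Nab (Box (Var p))
  | Bot => Bot
  | Top => Nab (Box Top)
  | One => One
  | And A B => Nab (Box (And (tr A) (tr B)))
  | Or A B => Or (tr A) (tr B)
  | Tens A B => Tens (tr A) (tr B)
  | Imp A B => Nab (Imp (tr A) (tr B))
  | Nab A => tr A
  end.

Lemma tr_trans A : nabla_free A -> tr A = trans A.
Proof.
  induction A; simpl; intros H; try tauto;
  try (destruct H; rewrite IHA1, IHA2; auto).
Qed.

Lemma stable_tr A : stable (tr A).
Proof.
  induction A; simpl; try apply stable_nab; auto.
  apply stable_one. apply stable_bot. apply stable_or; auto. apply stable_tens; auto.
Qed.

Lemma promote G Z : Forall stable G -> derivable STL_N (map Box G) Z ->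
  derivable STL_N G (Nab Z).
Proof.
  intros HG H. apply (r_N _ _ _ nN) in H.
  apply (cuts0 _ _ _ _ (F2_r _ (fun x => Nab (Box x)) G ltac:(
    intros x Hx; rewrite Forall_forall in HG; apply HG; auto))).
  unfold nablaL in H. rewrite map_map in H. exact H.
Qed.

Lemma all_stable G : Forall stable (map tr G).
Proof. induction G; simpl; constructor; auto using stable_tr. Qed.

Lemma map_tr_nab G : map tr (nablaL G) = map tr G.
Proof. unfold nablaL; rewrite map_map; reflexivity. Qed.

Lemma boxlift G X : derivable STL_N G X ->
  derivable STL_N (nablaL (map Box G)) X.
Proof. intros H. apply (cuts0 _ _ G); auto using counits. Qed.

Lemma fwd G A : derivable FL_l G A -> derivable STL_N (map tr G) (tr A).
Proof.
  induction 1; simpl in *; repeat rewrite map_app in *; simpl in *.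
  - apply ax_id.
  - apply ax_one.
  - apply ax_id.
  - apply promote. apply all_stable. apply boxR. apply ax_top.
  - apply ax_bot.
  - eapply r_cut; [exact IHderivable1 | exact IHderivable2].
  - eapply cut1; [|exact IHderivable]. eapply cutR; [apply counit|].
    apply (r_andL1 _ [] []). apply ax_id.
  - eapply cut1; [|exact IHderivable]. eapply cutR; [apply counit|].
    apply (r_andL2 _ [] []). apply ax_id.
  - apply promote. apply all_stable. apply boxR. apply r_andR; apply boxlift; auto.
  - apply r_orL; auto.
  - apply r_orR1; auto.
  - apply r_orR2; auto.
  - apply r_oneL; auto.
  - apply r_tensL; auto.
  - apply r_tensR; auto.
  - exact IHderivable.
  - apply (r_tensL _ [] []); auto.
  - apply r_impL; auto.
  - rewrite map_tr_nab in IHderivable. apply promote. apply all_stable.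
    apply r_impR. apply (cutsL _ _ (map tr G) [tr A]). apply counits. exact IHderivable.
  - discriminate.
  - auto.
  - auto.
Qed.

Fixpoint er (A : formula) : formula :=
  match A with
  | Var p => Var p
  | Bot => Bot
  | Top => Top
  | One => One
  | And A B => And (er A) (er B)
  | Or A B => Or (er A) (er B)
  | Tens A B => Tens (er A) (er B)
  | Imp A B => Imp (er A) (er B)
  | Nab A => er A
  end.

Lemma Pid X : derivable FL_l [Nab X] X.
Proof. apply r_P; [reflexivity|]. apply ax_id. Qed.
Lemma Fid X : derivable FL_l [X] (Nab X).
Proof. apply r_F; [reflexivity|]. apply ax_id. Qed.

Lemma bwd G A : derivable STL_N G A -> derivable FL_l (map er G) (er A).
Proof.
  induction 1; simpl in *; repeat rewrite map_app in *; simpl in *.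
  - apply ax_id.
  - apply ax_one.
  - apply ax_id.
  - apply ax_top.
  - apply ax_bot.
  - eapply r_cut; [exact IHderivable1 | exact IHderivable2].
  - apply r_andL1; auto.
  - apply r_andL2; auto.
  - apply r_andR; auto.
  - apply r_orL; auto.
  - apply r_orR1; auto.
  - apply r_orR2; auto.
  - apply r_oneL; auto.
  - apply r_tensL; auto.
  - apply r_tensR; auto.
  - auto.
  - apply (r_tensL _ [] []); auto.
  - rewrite app_assoc. apply (cut1 _ _ (Nab (Imp (er A) (er B)))). apply Fid.
    rewrite <- app_assoc. apply r_impL; auto.
  - unfold nablaL in IHderivable; rewrite map_map in IHderivable; simpl in IHderivable.
    apply r_impR. apply (cutsL _ _ (map er G) [er A]).
    + unfold nablaL. apply F2_l. intros; apply Pid.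
    + exact IHderivable.
  - unfold nablaL in *; rewrite map_map; exact IHderivable.
  - discriminate.
  - discriminate.
Qed.

Lemma cut11 S X Y Z : derivable S [X] Y -> derivable S [Y] Z -> derivable S [X] Z.
Proof. apply cutR. Qed.

Lemma boxI X : derivable FL_l [X] (Imp One X).
Proof. apply r_impR. simpl; apply (r_oneL _ [] [Nab X]). apply Pid. Qed.
Lemma boxE X : derivable FL_l [Imp One X] X.
Proof. eapply cut11; [apply Fid|]. apply counit. Qed.

Lemma equiv A : derivable FL_l [A] (er (trans A)) /\ derivable FL_l [er (trans A)] A.
Proof.
  induction A; simpl.
  - split; [apply boxI|apply boxE].
  - split; apply ax_id.
  - split; [apply boxI|apply boxE].
  - split; apply ax_id.
  - destruct IHA1 as [a1 a2], IHA2 as [b1 b2]. split.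
    + eapply cut11; [|apply boxI]. apply r_andR.
      * apply (r_andL1 _ [] []); auto.
      * apply (r_andL2 _ [] []); auto.
    + eapply cut11; [apply boxE|]. apply r_andR.
      * apply (r_andL1 _ [] []); auto.
      * apply (r_andL2 _ [] []); auto.
  - destruct IHA1 as [a1 a2], IHA2 as [b1 b2]. split;
    apply (r_orL _ [] []); simpl; [apply r_orR1|apply r_orR2|apply r_orR1|apply r_orR2]; auto.
  - destruct IHA1 as [a1 a2], IHA2 as [b1 b2]. split;
    apply (r_tensL _ [] []); simpl; apply (r_tensR _ [_] [_]); auto.
  - destruct IHA1 as [a1 a2], IHA2 as [b1 b2]. split.
    + apply r_impR. simpl. exact (r_impL _ [_] [] [] _ _ _ a2 b1).
    + apply r_impR. simpl. exact (r_impL _ [_] [] [] _ _ _ a1 b2).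
  - destruct IHA as [a1 a2]. split.
    + eapply cut11; [apply Pid|]; auto.
    + eapply cut11; [exact a2|apply Fid].
Qed.

Theorem theorem7p14 (G : list formula) (A : formula) :
  Forall nabla_free G -> nabla_free A ->
  (derivable FL_l G A <-> derivable STL_N (transL G) (trans A)).
Proof.
  intros HG HA. split.
  - intros H. apply fwd in H. rewrite <- tr_trans by exact HA.
    replace (transL G) with (map tr G); auto.
    unfold transL. apply map_ext_in. intros x Hx.
    rewrite Forall_forall in HG. apply tr_trans; auto.
  - intros H. apply bwd in H. eapply cutR; [|apply (proj2 (equiv A))].
    apply (cuts0 _ _ (map er (transL G))); auto.
    unfold transL. rewrite map_map.
    apply (F2_r _ (fun x => er (trans x))). intros; apply equiv.
Qed.
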